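(* Let $(L,\le,\wedge,\vee,0,1,{}^\perp)$ be a complete orthocomplemented lattice. Then $(\mathrm{Sub}_{\mathrm{clop}}(\Sigma^L),\le,\wedge,\vee,{}^\bullet)$ is a De Morgan algebra if and only if $(\mathrm{Sub}_{\mathrm{clop}}(\Sigma^L),\le,\wedge,\vee,\varnothing,\Sigma^L,{}^\bullet)$ is a boolean lattice; likewise $(\mathrm{Sub}_{\mathrm{clop}}(\Sigma^L),\le,\wedge,\vee,{}^\circ)$ is a De Morgan algebra if and only if $(\mathrm{Sub}_{\mathrm{clop}}(\Sigma^L),\le,\wedge,\vee,\varnothing,\Sigma^L,{}^\circ)$ is a boolean lattice.
   Context: Let $(L,\le,\wedge,\vee,0,1,{}^\perp)$ be a complete orthocomplemented lattice (bounded lattice with ${}^\perp$ antitone, $x^{\perp\perp}=x$, $x\wedge x^\perp=0$, $x\vee x^\perp=1$, all subsets having meets and joins). $\mathcal{V}_c(L)$ is the set of complete boolean sublattices of $L$ (containing $0,1$, closed under ${}^\perp$ and arbitrary meets and joins of $L$), other than $\{0,1\}$, ordered by inclusion. For a boolean lattice $V$, $\mathrm{sp}(V)$ is its Stone spectrum (boolean homomorphisms $V\to\{0,1\}$) with the Stone topology with basis $\varkappa_V(a):=\{\xi\in\mathrm{sp}(V)\mid\xi(a)=1\}$, $a\in V$. The spectral presheaf $\Sigma^L$ sends $V\mapsto\mathrm{sp}(V)$ and $V\subseteq W$ to restriction $\lambda\mapsto\lambda|_V$. $\mathrm{Sub}_{\mathrm{clop}}(\Sigma^L)$: subpresheaves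 $S$ with each $S_V$ clopen; complete distributive lattice with componentwise inclusion order, bottom $\varnothing$, top $\Sigma^L$, $(\bigwedge_i S^i)_V=\mathrm{int}(\bigcap_i S^i_V)$, $(\bigvee_i S^i)_V=\mathrm{cl}(\bigcup_i S^i_V)$. Daseinisations: $\delta^\wedge(a)_V:=\varkappa_V(\bigwedge\{b\in V\mid a\le b\})$, $\delta^\vee(a)_V:=\varkappa_V(\bigvee\{b\in V\mid b\le a\})$; $\varepsilon^\wedge(S):=\bigvee\{a\in L\mid\delta^\wedge(a)\le S\}$, $\varepsilon^\vee(S):=\bigwedge\{a\in L\mid S\le\delta^\vee(a)\}$; $S^\bullet:=\delta^\wedge((\varepsilon^\wedge(S))^\perp)$, $S^\circ:=\delta^\vee((\varepsilon^\vee(S))^\perp)$. A De Morgan algebra is a distributive lattice with a map ${}^\neg$ that is an involution: $x\le y\Rightarrow y^\neg\le x^\neg$, $x\le x^{\neg\neg}$, $x^{\neg\neg}\le x$. A boolean lattice is a bounded distributive lattice with an orthocomplementation (antitone, $x^{\neg\neg}=x$, $x\wedge x^\neg=0$, $x\vee x^\neg=1$). *)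

(* Defs.v *)
From Stdlib Require Import Classical.

Record COL := {
  car :> Type;
  le : car -> car -> Prop;
  le_refl : forall x, le x x;
  le_trans : forall x y z, le x y -> le y z -> le x z;
  le_antisym : forall x y, le x y -> le y x -> x = y;
  Inf : (car -> Prop) -> car;
  Inf_lb : forall (S : car -> Prop) x, S x -> le (Inf S) x;
  Inf_glb : forall (S : car -> Prop) y, (forall x, S x -> le y x) -> le y (Inf S);
  Sup : (car -> Prop) -> car;
  Sup_ub : forall (S : car -> Prop) x, S x -> le x (Sup S);
  Sup_lub : forall (S : car -> Prop) y, (forall x, S x -> le x y) -> le (Sup S) y;
  perp : car -> car;
  perp_anti : forall x y, le x y -> le (perp y) (perp x);
  perp_invol : forall x, perp (perp x) = x;
  perp_meet : forall x, Inf (fun z => z = x \/ z = perp x) = Inf (fun _ => True);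
  perp_join : forall x, Sup (fun z => z = x \/ z = perp x) = Sup (fun _ => True)
}.

Arguments le {c} _ _.
Arguments Inf {c} _.
Arguments Sup {c} _.
Arguments perp {c} _.
Arguments Inf_lb {c} _ _ _.
Arguments Inf_glb {c} _ _ _.
Arguments Sup_ub {c} _ _ _.
Arguments Sup_lub {c} _ _ _.
Arguments le_antisym {c} _ _ _ _.
Arguments le_refl {c} _.

Section Generic.
(* An algebraic structure whose carrier is the subset [P] of a type [T]
   (equality of elements = mutual order, i.e. antisymmetry of [leT]). *)
Context {T : Type} (P : T -> Prop) (leT : T -> T -> Prop) (meetT joinT : T -> T -> T).

Definition eqv (x y : T) := leT x y /\ leT y x.

Definition is_lattice : Prop :=
  (forall x y, P x -> P y -> P (meetT x y) /\ P (joinT x y)) /\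
  (forall x, P x -> leT x x) /\
  (forall x y z, P x -> P y -> P z -> leT x y -> leT y z -> leT x z) /\
  (forall x y, P x -> P y ->
     leT (meetT x y) x /\ leT (meetT x y) y /\
     forall z, P z -> leT z x -> leT z y -> leT z (meetT x y)) /\
  (forall x y, P x -> P y ->
     leT x (joinT x y) /\ leT y (joinT x y) /\
     forall z, P z -> leT x z -> leT y z -> leT (joinT x y) z).

Definition is_distributive : Prop :=
  forall x y z, P x -> P y -> P z ->
    eqv (meetT x (joinT y z)) (joinT (meetT x y) (meetT x z)).

Definition DeMorganAlgebra (neg : T -> T) : Prop :=
  is_lattice /\ is_distributive /\
  (forall x, P x -> P (neg x)) /\
  (forall x y, P x -> P y -> leT x y -> leT (neg y) (neg x)) /\
  (forall x, P x -> leT x (neg (neg x))) /\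
  (forall x, P x -> leT (neg (neg x)) x).

Definition BooleanLattice (botT topT : T) (neg : T -> T) : Prop :=
  is_lattice /\ is_distributive /\
  P botT /\ P topT /\
  (forall x, P x -> leT botT x /\ leT x topT) /\
  (forall x, P x -> P (neg x)) /\
  (forall x y, P x -> P y -> leT x y -> leT (neg y) (neg x)) /\
  (forall x, P x -> eqv (neg (neg x)) x) /\
  (forall x, P x -> eqv (meetT x (neg x)) botT) /\
  (forall x, P x -> eqv (joinT x (neg x)) topT).
End Generic.

Section Spectral.
Context {L : COL}.

Definition bot : L := Inf (fun _ => True).
Definition top : L := Sup (fun _ => True).
Definition meet (x y : L) : L := Inf (fun z => z = x \/ z = y).
Definition join (x y : L) : L := Sup (fun z => z = x \/ z = y).

(* complete boolean sublattice of L, different from {0,1} *)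
Definition is_cbs (V : L -> Prop) : Prop :=
  V bot /\ V top /\
  (forall x, V x -> V (perp x)) /\
  (forall S : L -> Prop, (forall x, S x -> V x) -> V (Inf S) /\ V (Sup S)) /\
  (forall x y z, V x -> V y -> V z -> meet x (join y z) = join (meet x y) (meet x z)) /\
  ~ (forall x, V x <-> x = bot \/ x = top).

Definition Vc := { V : L -> Prop | is_cbs V }.
Definition vset (V : Vc) : L -> Prop := proj1_sig V.
Definition vincl (V W : Vc) : Prop := forall x, vset V x -> vset W x.

Definition sub (V : Vc) := { x : L | vset V x }.

Definition is_hom (V : Vc) (xi : sub V -> bool) : Prop :=
  (forall c : sub V, proj1_sig c = bot -> xi c = false) /\
  (forall c : sub V, proj1_sig c = top -> xi c = true) /\
  (forall a b c : sub V, proj1_sig c = meet (proj1_sig a) (proj1_sig b) ->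
       xi c = andb (xi a) (xi b)) /\
  (forall a b c : sub V, proj1_sig c = join (proj1_sig a) (proj1_sig b) ->
       xi c = orb (xi a) (xi b)) /\
  (forall a c : sub V, proj1_sig c = perp (proj1_sig a) -> xi c = negb (xi a)).

Definition sp (V : Vc) := { xi : sub V -> bool | is_hom V xi }.

Lemma res_hom (V W : Vc) (H : vincl V W) (lam : sp W) :
  is_hom V (fun x : sub V => proj1_sig lam (exist _ (proj1_sig x) (H _ (proj2_sig x)))).
Proof.
  destruct lam as [l [h0 [h1 [hm [hj hp]]]]]; simpl.
  split; [|split; [|split; [|split]]].
  - intros c Hc; apply h0; exact Hc.
  - intros c Hc; apply h1; exact Hc.
  - intros a b c Hc; apply hm; exact Hc.
  - intros a b c Hc; apply hj; exact Hc.
  - intros a c Hc; apply hp; exact Hc.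
Qed.

Definition res (V W : Vc) (H : vincl V W) (lam : sp W) : sp V :=
  exist _ _ (res_hom V W H lam).

Definition kappa (V : Vc) (a : L) (xi : sp V) : Prop :=
  exists h : vset V a, proj1_sig xi (exist _ a h) = true.

Definition openS (V : Vc) (U : sp V -> Prop) : Prop :=
  forall xi, U xi -> exists a, vset V a /\ kappa V a xi /\ forall eta, kappa V a eta -> U eta.
Definition clopenS (V : Vc) (U : sp V -> Prop) : Prop :=
  openS V U /\ openS V (fun xi => ~ U xi).
Definition interior (V : Vc) (U : sp V -> Prop) (xi : sp V) : Prop :=
  exists a, vset V a /\ kappa V a xi /\ forall eta, kappa V a eta -> U eta.
Definition closure (V : Vc) (U : sp V -> Prop) (xi : sp V) : Prop :=
  forall a, vset V a -> kappa V a xi -> exists eta, kappa V a eta /\ U eta.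

Definition Family := forall V : Vc, sp V -> Prop.
Definition is_subpresheaf (S : Family) : Prop :=
  forall (V W : Vc) (H : vincl V W) (lam : sp W), S W lam -> S V (res V W H lam).
Definition is_subclop (S : Family) : Prop :=
  is_subpresheaf S /\ forall V, clopenS V (S V).

Definition leF (S T : Family) : Prop := forall V xi, S V xi -> T V xi.

Definition meetF (S T : Family) : Family :=
  fun V => interior V (fun xi => S V xi /\ T V xi).
Definition joinF (S T : Family) : Family :=
  fun V => closure V (fun xi => S V xi \/ T V xi).
Definition emptyF : Family := fun V _ => False.
Definition fullF : Family := fun V _ => True.

Definition delta_and (a : L) : Family :=
  fun V => kappa V (Inf (fun b => vset V b /\ le a b)).
Definition delta_or (a : L) : Family :=
  fun V => kappa V (Sup (fun b => vset V b /\ le b a)).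

Definition eps_and (S : Family) : L :=
  Sup (fun a => leF (delta_and a) S).
Definition eps_or (S : Family) : L :=
  Inf (fun a => leF S (delta_or a)).

Lemma meet_le (x y : L) : le x y -> meet x y = x.
Proof.
  intro Hxy. apply le_antisym.
  - apply Inf_lb; left; reflexivity.
  - apply Inf_glb; intros z [->| ->]; [apply le_refl | exact Hxy].
Qed.

Lemma hom_mono (V : Vc) (xi : sp V) (a b : sub V) :
  le (proj1_sig a) (proj1_sig b) -> proj1_sig xi a = true -> proj1_sig xi b = true.
Proof.
  intros Hab Ha. assert (hm := proj1 (proj2 (proj2 (proj2_sig xi)))).
  assert (E := hm a b a (eq_sym (meet_le _ _ Hab))).
  rewrite Ha in E; simpl in E; congruence.
Qed.

Lemma kappa_mono (V : Vc) (a b : L) (xi : sp V) :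
  vset V b -> le a b -> kappa V a xi -> kappa V b xi.
Proof.
  intros hb Hab [ha Ha]. exists hb.
  exact (hom_mono V xi (exist _ a ha) (exist _ b hb) Hab Ha).
Qed.

Lemma vset_perp (V : Vc) x : vset V x -> vset V (perp x).
Proof. exact (proj1 (proj2 (proj2 (proj2_sig V))) x). Qed.
Lemma vset_Inf (V : Vc) (S : L -> Prop) : (forall x, S x -> vset V x) -> vset V (Inf S).
Proof. intro H; exact (proj1 (proj1 (proj2 (proj2 (proj2 (proj2_sig V)))) S H)). Qed.
Lemma vset_Sup (V : Vc) (S : L -> Prop) : (forall x, S x -> vset V x) -> vset V (Sup S).
Proof. intro H; exact (proj2 (proj1 (proj2 (proj2 (proj2 (proj2_sig V)))) S H)). Qed.
Lemma vset_top (V : Vc) : vset V top.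
Proof. exact (proj1 (proj2 (proj2_sig V))). Qed.

Lemma kappa_clopen (V : Vc) (c : L) : vset V c -> clopenS V (kappa V c).
Proof.
  intro hc; split.
  - intros xi Hxi; exists c; split; [exact hc | split; [exact Hxi | auto]].
  - intros xi Hn.
    assert (hpc : vset V (perp c)) by (apply vset_perp; exact hc).
    exists (perp c); split; [exact hpc|split].
    + exists hpc. assert (hp := proj2 (proj2 (proj2 (proj2 (proj2_sig xi))))).
      rewrite (hp (exist _ c hc) (exist _ (perp c) hpc) eq_refl).
      destruct (proj1_sig xi (exist _ c hc)) eqn:E; [|reflexivity].
      exfalso; apply Hn; exists hc; exact E.
    + intros eta [h' H'] [h Hh]. assert (hp := proj2 (proj2 (proj2 (proj2 (proj2_sig eta))))).
      rewrite (hp (exist _ c h) (exist _ (perp c) h') eq_refl) in H'.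
      rewrite Hh in H'; discriminate.
Qed.

Lemma open_ext (V : Vc) (U U' : sp V -> Prop) :
  (forall xi, U xi <-> U' xi) -> openS V U -> openS V U'.
Proof.
  intros E HU xi Hxi. destruct (HU xi (proj2 (E xi) Hxi)) as [a [ha [Hk Hs]]].
  exists a; split; [exact ha|split; [exact Hk|]]. intros eta He; apply E, Hs, He.
Qed.

Lemma open_inter (V : Vc) (U W : sp V -> Prop) :
  openS V U -> openS V W -> openS V (fun xi => U xi /\ W xi).
Proof.
  intros HU HW xi [Hu Hw].
  destruct (HU xi Hu) as [a [ha [Ka Sa]]].
  destruct (HW xi Hw) as [b [hb [Kb Sb]]].
  assert (hc : vset V (meet a b)).
  { apply vset_Inf. intros z [->| ->]; assumption. }
  exists (meet a b); split; [exact hc|split].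
  - destruct Ka as [ha' Ka]; destruct Kb as [hb' Kb]. exists hc.
    assert (hm := proj1 (proj2 (proj2 (proj2_sig xi)))).
    rewrite (hm (exist _ a ha') (exist _ b hb') (exist _ (meet a b) hc) eq_refl).
    rewrite Ka, Kb; reflexivity.
  - intros eta Ke; split.
    + apply Sa. apply (kappa_mono V (meet a b)); [exact ha| |exact Ke].
      apply Inf_lb; left; reflexivity.
    + apply Sb. apply (kappa_mono V (meet a b)); [exact hb| |exact Ke].
      apply Inf_lb; right; reflexivity.
Qed.

Lemma open_union (V : Vc) (U W : sp V -> Prop) :
  openS V U -> openS V W -> openS V (fun xi => U xi \/ W xi).
Proof.
  intros HU HW xi [Hu|Hw].
  - destruct (HU xi Hu) as [a [ha [Ka Sa]]]; exists a; split; [exact ha|split; [exact Ka|]].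
    intros eta He; left; apply Sa, He.
  - destruct (HW xi Hw) as [a [ha [Ka Sa]]]; exists a; split; [exact ha|split; [exact Ka|]].
    intros eta He; right; apply Sa, He.
Qed.

Lemma interior_open (V : Vc) (U : sp V -> Prop) :
  openS V U -> forall xi, interior V U xi <-> U xi.
Proof.
  intros HU xi; split.
  - intros [a [_ [Ka Sa]]]; apply Sa, Ka.
  - intro Hxi; exact (HU xi Hxi).
Qed.

Lemma closure_closed (V : Vc) (U : sp V -> Prop) :
  openS V (fun xi => ~ U xi) -> forall xi, closure V U xi <-> U xi.
Proof.
  intros HC xi; split.
  - intro Hcl. destruct (classic (U xi)) as [H|H]; [exact H|].
    destruct (HC xi H) as [a [ha [Ka Sa]]].
    destruct (Hcl a ha Ka) as [eta [Ke Ue]]. exfalso; exact (Sa eta Ke Ue).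
  - intros Hxi a _ Ka; exists xi; split; assumption.
Qed.

Lemma meetF_subclop (S T : Family) : is_subclop S -> is_subclop T -> is_subclop (meetF S T).
Proof.
  intros [PS CS] [PT CT].
  assert (E : forall V xi, meetF S T V xi <-> S V xi /\ T V xi).
  { intros V xi; apply interior_open, open_inter; [apply CS|apply CT]. }
  split.
  - intros V W H lam Hl. apply E in Hl as [Hs Ht]. apply E; split.
    + apply PS, Hs.
    + apply PT, Ht.
  - intro V; split.
    + apply (open_ext V (fun xi => S V xi /\ T V xi)).
      { intro xi; split; apply E. }
      apply open_inter; [apply CS|apply CT].
    + apply (open_ext V (fun xi => ~ S V xi \/ ~ T V xi)).
      { intro xi; rewrite E; tauto. }
      apply open_union; [apply CS|apply CT].
Qed.

Lemma joinF_subclop (S T : Family) : is_subclop S -> is_subclop T -> is_subclop (joinF S T).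
Proof.
  intros [PS CS] [PT CT].
  assert (E : forall V xi, joinF S T V xi <-> S V xi \/ T V xi).
  { intros V xi; apply closure_closed.
    apply (open_ext V (fun xi => ~ S V xi /\ ~ T V xi)); [intro; tauto|].
    apply open_inter; [apply CS|apply CT]. }
  split.
  - intros V W H lam Hl. apply E in Hl. apply E.
    destruct Hl as [Hs|Ht]; [left; apply PS, Hs | right; apply PT, Ht].
  - intro V; split.
    + apply (open_ext V (fun xi => S V xi \/ T V xi)).
      { intro xi; split; apply E. }
      apply open_union; [apply CS|apply CT].
    + apply (open_ext V (fun xi => ~ S V xi /\ ~ T V xi)).
      { intro xi; rewrite E; tauto. }
      apply open_inter; [apply CS|apply CT].
Qed.

Lemma top_kappa (V : Vc) (xi : sp V) : vset V top /\ kappa V top xi.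
Proof.
  split; [apply vset_top|]. exists (vset_top V).
  apply (proj1 (proj2 (proj2_sig xi))); reflexivity.
Qed.

Lemma emptyF_subclop : is_subclop emptyF.
Proof.
  split; [intros V W H lam []|].
  intro V; split; [intros xi []|].
  intros xi _. destruct (top_kappa V xi) as [ht Kt].
  exists top; split; [exact ht|split; [exact Kt|]]. intros eta _ [].
Qed.

Lemma fullF_subclop : is_subclop fullF.
Proof.
  split; [intros V W H lam _; exact I|].
  intro V; split; [|intros xi H; exfalso; apply H; exact I].
  intros xi _. destruct (top_kappa V xi) as [ht Kt].
  exists top; split; [exact ht|split; [exact Kt|]]. intros; exact I.
Qed.

Lemma delta_and_subclop (a : L) : is_subclop (delta_and a).
Proof.
  assert (HI : forall V : Vc, vset V (Inf (fun b => vset V b /\ le a b))).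
  { intros V; first [apply vset_Inf | apply vset_Sup]. intros x [Hx _]; exact Hx. }
  split.
  - intros V W H lam [hW K]. unfold delta_and.
    exists (HI V). simpl.
    refine (hom_mono W lam (exist _ _ hW) (exist _ _ (H _ (HI V))) _ K).
    simpl. apply Inf_glb. intros x [Hx Hax]. apply Inf_lb. split; [apply H, Hx|exact Hax].
  - intro V; apply kappa_clopen, HI.
Qed.



Definition bulletF (S : Family) : Family := delta_and (perp (eps_and S)).
Definition circF (S : Family) : Family := delta_or (perp (eps_or S)).

End Spectral.

(* Main.v *)
Require Import Defs.
From Stdlib Require Import Classical ClassicalEpsilon.

Module ZornMod.
From mathcomp Require Import all_boot classical_sets boolp.
Lemma my_zorn (T : Type) (P : (T -> Prop) -> Prop) :
  (forall F : (T -> Prop) -> Prop, (forall X, F X -> P X) ->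
     (forall X Y, F X -> F Y -> (forall t, X t -> Y t) \/ (forall t, Y t -> X t)) ->
     P (fun t => exists X, F X /\ X t)) ->
  exists A, P A /\ forall B, (forall t, A t -> B t) -> P B -> forall t, B t -> A t.
Proof.
Local Open Scope classical_set_scope.
move=> H.
have [A [PA Amax]] : exists A, P A /\ forall B, A `<` B -> ~ P B.
  apply: Zorn_bigcup => F FP Ftot.
  have := H F FP Ftot.
  congr P; apply: funext => t; apply: propext; split.
    by move=> [X [FX Xt]]; exists X.
  by move=> [X FX Xt]; exists X.
exists A; split => // B AB PB t Bt.
apply: contrapT => nAt; apply: (Amax B) => //.
split; first by move=> x; apply: AB.
by move=> E; apply: nAt; apply: E.
Qed.
End ZornMod.
Set Bullet Behavior "Strict Subproofs".

Section Work.
Context {L : COL}.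

Lemma le_bot (x : L) : le bot x.
Proof. apply Inf_lb; exact I. Qed.
Lemma le_top (x : L) : le x top.
Proof. apply Sup_ub; exact I. Qed.
Lemma meet_lb1 (x y : L) : le (meet x y) x.
Proof. apply Inf_lb; left; reflexivity. Qed.
Lemma meet_lb2 (x y : L) : le (meet x y) y.
Proof. apply Inf_lb; right; reflexivity. Qed.
Lemma meet_glb (x y z : L) : le z x -> le z y -> le z (meet x y).
Proof. intros H1 H2; apply Inf_glb; intros w [->| ->]; assumption. Qed.
Lemma join_ub1 (x y : L) : le x (join x y).
Proof. apply Sup_ub; left; reflexivity. Qed.
Lemma join_ub2 (x y : L) : le y (join x y).
Proof. apply Sup_ub; right; reflexivity. Qed.
Lemma join_lub (x y z : L) : le x z -> le y z -> le (join x y) z.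
Proof. intros H1 H2; apply Sup_lub; intros w [->| ->]; assumption. Qed.
Lemma meet_perp (x : L) : meet x (perp x) = bot.
Proof. unfold meet, bot; apply perp_meet. Qed.
Lemma join_perp (x : L) : join x (perp x) = top.
Proof. unfold join, top; apply perp_join. Qed.
Lemma perp_le (x y : L) : le x (perp y) -> le y (perp x).
Proof. intro H. apply perp_anti in H. rewrite perp_invol in H. exact H. Qed.
Lemma perp_le' (x y : L) : le (perp x) y -> le (perp y) x.
Proof. intro H. apply perp_anti in H. rewrite perp_invol in H. exact H. Qed.

Lemma demorgan (a b : L) : perp (join a b) = meet (perp a) (perp b).
Proof.
  apply le_antisym.
  - apply meet_glb; apply perp_anti; [apply join_ub1|apply join_ub2].
  - apply perp_le. apply join_lub; apply perp_le; [apply meet_lb1|apply meet_lb2].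
Qed.

Lemma perp_top_le : le (perp (@top L)) bot.
Proof.
  rewrite <- (meet_perp top). apply meet_glb; [apply le_top|apply le_refl].
Qed.
Lemma top_le_perp_bot : le (@top L) (perp bot).
Proof.
  rewrite <- (join_perp bot). apply join_lub; [apply le_bot|apply le_refl].
Qed.

Lemma vset_bot (V : @Vc L) : vset V bot.
Proof. exact (proj1 (proj2_sig V)). Qed.
Lemma vset_meet (V : @Vc L) x y : vset V x -> vset V y -> vset V (meet x y).
Proof. intros; apply vset_Inf; intros z [->| ->]; assumption. Qed.
Lemma vset_join (V : @Vc L) x y : vset V x -> vset V y -> vset V (join x y).
Proof. intros; apply vset_Sup; intros z [->| ->]; assumption. Qed.
Lemma vdistr (V : @Vc L) x y z : vset V x -> vset V y -> vset V z ->
  meet x (join y z) = join (meet x y) (meet x z).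
Proof. intros hx hy hz; exact (proj1 (proj2 (proj2 (proj2 (proj2 (proj2_sig V))))) x y z hx hy hz). Qed.

Lemma bool_disj (V : @Vc L) (a y : L) : vset V a -> vset V y -> meet a y = bot ->
  le a (perp y).
Proof.
  intros ha hy E.
  assert (Ea : a = meet a (join y (perp y))).
  { rewrite join_perp. symmetry. apply meet_le, le_top. }
  rewrite Ea, (vdistr V), E by (auto using vset_perp).
  apply join_lub; [apply le_bot|apply meet_lb2].
Qed.

Lemma kappa_bot (V : @Vc L) (xi : sp V) : kappa V bot xi -> False.
Proof.
  intros [h K]. rewrite (proj1 (proj2_sig xi) (exist _ bot h) eq_refl) in K. discriminate.
Qed.
Lemma kappa_perp (V : @Vc L) (c : L) (xi : sp V) :
  kappa V c xi -> kappa V (perp c) xi -> False.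
Proof.
  intros [h1 K1] [h2 K2].
  assert (hp := proj2 (proj2 (proj2 (proj2 (proj2_sig xi))))).
  rewrite (hp (exist _ c h1) (exist _ (perp c) h2) eq_refl), K1 in K2. discriminate.
Qed.
Lemma kappa_meet (V : @Vc L) (a b : L) (xi : sp V) :
  vset V a -> vset V b -> kappa V (meet a b) xi -> kappa V a xi /\ kappa V b xi.
Proof.
  intros ha hb K; split; (eapply kappa_mono; [eassumption| |exact K]);
   [apply meet_lb1|apply meet_lb2].
Qed.

Definition filt (V : @Vc L) (x : L) (A : L -> Prop) : Prop :=
  (forall y, A y -> vset V y) /\
  (forall y z, A y -> vset V z -> le y z -> A z) /\
  (forall y z, A y -> A z -> A (meet y z)) /\
  ~ A bot /\ (forall y, A y -> A x).

Lemma bpi (V : @Vc L) (x : L) : vset V x -> x <> bot -> exists eta : sp V, kappa V x eta.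
Proof.
  intros hx nx.
  destruct (ZornMod.my_zorn L (filt V x)) as [A [[AV [Aup [Ameet [Abot Ax]]]] Amax]].
  { intros F FP Ftot. split; [|split; [|split; [|split]]].
    - intros y [X [FX Xy]]. exact (proj1 (FP X FX) y Xy).
    - intros y z [X [FX Xy]] hz le. exists X; split; [exact FX|].
      exact (proj1 (proj2 (FP X FX)) y z Xy hz le).
    - intros y z [X [FX Xy]] [Y [FY Yz]].
      destruct (Ftot X Y FX FY) as [S|S].
      + exists Y; split; [exact FY|]. apply (FP Y FY); auto.
      + exists X; split; [exact FX|]. apply (FP X FX); auto.
    - intros [X [FX Xb]]. exact (proj1 (proj2 (proj2 (proj2 (FP X FX)))) Xb).
    - intros y [X [FX Xy]]. exists X; split; [exact FX|].
      exact (proj2 (proj2 (proj2 (proj2 (FP X FX)))) y Xy). }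
  assert (Pfilt : filt V x (fun y => vset V y /\ le x y)).
  { split; [|split; [|split; [|split]]].
    - intros y [h _]; exact h.
    - intros y z [_ H1] hz H2. split; [exact hz|]. eapply le_trans; eassumption.
    - intros y z [h1 H1] [h2 H2]. split; [apply vset_meet; assumption|].
      apply meet_glb; assumption.
    - intros [_ H]. apply nx. apply le_antisym; [exact H|apply le_bot].
    - intros y _. split; [exact hx|apply le_refl]. }
  assert (HAx : A x).
  { destruct (classic (A x)) as [H|H]; [exact H|].
    apply (Amax _ (fun y Ay => False_ind _ (H (Ax y Ay))) Pfilt).
    split; [exact hx|apply le_refl]. }
  assert (Ultra : forall y, vset V y -> ~ A y -> A (perp y)).
  { intros y hy nAy.
    destruct (classic (exists a, A a /\ meet a y = bot)) as [[a [Aa E]]|NE].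
    - apply (Aup a); [exact Aa|apply vset_perp, hy|].
      apply (bool_disj V); [apply AV, Aa|exact hy|exact E].
    - exfalso. apply nAy.
      set (B := fun z => vset V z /\ exists a, A a /\ le (meet a y) z).
      assert (PB : filt V x B).
      { split; [|split; [|split; [|split]]].
        - intros z [h _]; exact h.
        - intros z w [h [a [Aa H]]] hw le. split; [exact hw|].
          exists a; split; [exact Aa|]. eapply le_trans; eassumption.
        - intros z w [h1 [a1 [A1 H1]]] [h2 [a2 [A2 H2]]].
          split; [apply vset_meet; assumption|].
          exists (meet a1 a2); split; [apply Ameet; assumption|].
          apply meet_glb.
          + eapply le_trans; [|exact H1]. apply meet_glb; [|apply meet_lb2].
            eapply le_trans; [apply meet_lb1|apply meet_lb1].
          + eapply le_trans; [|exact H2]. apply meet_glb; [|apply meet_lb2].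
            eapply le_trans; [apply meet_lb1|apply meet_lb2].
        - intros [_ [a [Aa H]]]. apply NE. exists a; split; [exact Aa|].
          apply le_antisym; [exact H|apply le_bot].
        - intros z _. split; [exact hx|]. exists x; split; [exact HAx|apply meet_lb1]. }
      apply (Amax B).
      + intros z Az. split; [apply AV, Az|]. exists z; split; [exact Az|apply meet_lb1].
      + exact PB.
      + split; [exact hy|]. exists x; split; [exact HAx|apply meet_lb2]. }
  assert (Atop : A top).
  { apply (Aup x); [exact HAx|apply vset_top|apply le_top]. }
  assert (Hom : is_hom V (fun c => if excluded_middle_informative (A (proj1_sig c))
                                  then true else false)).
  { split; [|split; [|split; [|split]]].
    - intros c Hc. destruct excluded_middle_informative as [H|H]; [|reflexivity].
      rewrite Hc in H; contradiction.
    - intros c Hc. destruct excluded_middle_informative as [H|H]; [reflexivity|].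
      rewrite Hc in H; contradiction.
    - intros [a ha] [b hb] [c hc] Hc; simpl in *; subst c.
      destruct (excluded_middle_informative (A a)) as [Ha|Ha];
      destruct (excluded_middle_informative (A b)) as [Hb|Hb];
      destruct excluded_middle_informative as [Hc|Hc]; simpl; auto.
      all: exfalso; first [ apply Hc, Ameet; assumption
        | apply Hb, (Aup _ _ Hc hb), meet_lb2 | apply Ha, (Aup _ _ Hc ha), meet_lb1 ].
    - intros [a ha] [b hb] [c hc] Hc; simpl in *; subst c.
      destruct (excluded_middle_informative (A a)) as [Ha|Ha];
      destruct (excluded_middle_informative (A b)) as [Hb|Hb];
      destruct excluded_middle_informative as [Hc|Hc]; simpl; auto.
      all: exfalso; first [ apply Hc, (Aup _ _ Ha hc), join_ub1
        | apply Hc, (Aup _ _ Hb hc), join_ub2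
        | apply Abot; rewrite <- (meet_perp (join a b));
          apply Ameet; [exact Hc|]; rewrite demorgan;
          apply Ameet; apply Ultra; assumption ].
    - intros [a ha] [c hc] Hc; simpl in *; subst c.
      destruct (excluded_middle_informative (A a)) as [Ha|Ha];
      destruct excluded_middle_informative as [Hc|Hc]; simpl; auto.
      all: exfalso; first [ apply Abot; rewrite <- (meet_perp a); apply Ameet; assumption
        | apply Hc, Ultra; assumption ]. }
  exists (exist _ _ Hom). exists hx. simpl.
  destruct excluded_middle_informative as [H|H]; [reflexivity|contradiction].
Qed.

Lemma meet_bot_by_bpi (V : @Vc L) (a b : L) : vset V a -> vset V b ->
  (forall eta : sp V, kappa V a eta -> kappa V b eta -> False) -> meet a b = bot.
Proof.
  intros ha hb H. destruct (classic (meet a b = bot)) as [E|E]; [exact E|].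
  destruct (bpi V (meet a b) (vset_meet V a b ha hb) E) as [eta K].
  destruct (kappa_meet V a b eta ha hb K). exfalso; eapply H; eassumption.
Qed.

Definition upV (V : @Vc L) (a : L) := Inf (fun b => vset V b /\ le a b).
Definition lowV (V : @Vc L) (a : L) := Sup (fun b => vset V b /\ le b a).
Lemma vset_upV (V : @Vc L) a : vset V (upV V a).
Proof. apply vset_Inf; intros x [h _]; exact h. Qed.
Lemma vset_lowV (V : @Vc L) a : vset V (lowV V a).
Proof. apply vset_Sup; intros x [h _]; exact h. Qed.
Lemma le_upV (V : @Vc L) a : le a (upV V a).
Proof. apply Inf_glb; intros x [_ h]; exact h. Qed.
Lemma le_lowV (V : @Vc L) a : le (lowV V a) a.
Proof. apply Sup_lub; intros x [_ h]; exact h. Qed.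

Lemma bullet_cover (S : @Family L) : is_subclop S ->
  forall V xi, S V xi \/ bulletF S V xi.
Proof.
  intros [PS CS] V xi. destruct (classic (S V xi)) as [H|nS]; [left; exact H|right].
  destruct (proj2 (CS V) xi nS) as [c [hc [Kc Sc]]].
  unfold bulletF, delta_and. fold (upV V (perp (eps_and S))).
  apply (kappa_mono V c); [apply vset_upV| |exact Kc].
  eapply le_trans; [|apply le_upV]. apply perp_le.
  apply Sup_lub. intros b Hb.
  eapply le_trans; [apply (le_upV V)|].
  apply (bool_disj V); [apply vset_upV|exact hc|].
  apply (meet_bot_by_bpi V); [apply vset_upV|exact hc|].
  intros eta K1 K2. apply (Sc eta K2). apply Hb. exact K1.
Qed.

Lemma circ_disj (S : @Family L) : is_subclop S ->
  forall V xi, S V xi -> circF S V xi -> False.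
Proof.
  intros [PS CS] V xi HS HC.
  destruct (proj1 (CS V) xi HS) as [c [hc [Kc Sc]]].
  apply (kappa_perp V c xi Kc).
  unfold circF, delta_or in HC. fold (lowV V (perp (eps_or S))) in HC.
  apply (kappa_mono V _ _ xi (vset_perp V c hc)) in HC; [exact HC|].
  eapply le_trans; [apply le_lowV|]. apply perp_anti.
  apply Inf_glb. intros b Hb.
  eapply le_trans; [|apply (le_lowV V)].
  rewrite <- (perp_invol _ (lowV V b)).
  apply (bool_disj V); [exact hc|apply vset_perp, vset_lowV|].
  apply (meet_bot_by_bpi V); [exact hc|apply vset_perp, vset_lowV|].
  intros eta K1 K2. apply (kappa_perp V (lowV V b) eta); [|exact K2].
  apply Hb. apply Sc. exact K1.
Qed.

Lemma meetF_proj (S T : @Family L) V xi : meetF S T V xi -> S V xi /\ T V xi.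
Proof. intros [a [_ [Ka Sa]]]. apply Sa, Ka. Qed.
Lemma joinF_inl (S T : @Family L) V xi : S V xi -> joinF S T V xi.
Proof. intros H a _ Ka. exists xi; split; [exact Ka|left; exact H]. Qed.
Lemma joinF_inr (S T : @Family L) V xi : T V xi -> joinF S T V xi.
Proof. intros H a _ Ka. exists xi; split; [exact Ka|right; exact H]. Qed.

Lemma bullet_full_empty : leF (bulletF (@fullF L)) emptyF.
Proof.
  intros V xi K. unfold bulletF, delta_and in K.
  apply (kappa_bot V xi). eapply kappa_mono; [apply vset_bot| |exact K].
  apply Inf_lb. split; [apply vset_bot|].
  eapply le_trans; [|apply perp_top_le]. apply perp_anti.
  apply Sup_ub. intros W eta _; exact I.
Qed.

Lemma full_circ_empty : leF (@fullF L) (circF emptyF).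
Proof.
  intros V xi _. unfold circF, delta_or.
  destruct (top_kappa V xi) as [ht Kt].
  eapply kappa_mono; [| |exact Kt].
  - apply vset_Sup; intros z [h _]; exact h.
  - apply Sup_ub. split; [exact ht|].
    eapply le_trans; [apply top_le_perp_bot|]. apply perp_anti.
    apply Inf_lb. intros W eta [].
Qed.

Lemma DM_to_B_common (neg : @Family L -> @Family L) :
  DeMorganAlgebra (@is_subclop L) (@leF L) (@meetF L) (@joinF L) neg ->
  (forall x, is_subclop x -> eqv (@leF L) (meetF x (neg x)) emptyF) ->
  (forall x, is_subclop x -> eqv (@leF L) (joinF x (neg x)) fullF) ->
  BooleanLattice (@is_subclop L) (@leF L) (@meetF L) (@joinF L) emptyF fullF neg.
Proof.
  intros [lat [dist [negP [anti [inv1 inv2]]]]] Hm Hj.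
  split; [exact lat|split; [exact dist|split; [exact emptyF_subclop|split; [exact fullF_subclop|]]]].
  split; [intros x _; split; [intros V xi []|intros V xi _; exact I]|].
  split; [exact negP|split; [exact anti|split; [|split; [exact Hm|exact Hj]]]].
  intros x Px; split; [apply inv2, Px|apply inv1, Px].
Qed.

Lemma B_to_DM (neg : @Family L -> @Family L) bo tp :
  BooleanLattice (@is_subclop L) (@leF L) (@meetF L) (@joinF L) bo tp neg ->
  DeMorganAlgebra (@is_subclop L) (@leF L) (@meetF L) (@joinF L) neg.
Proof.
  intros [lat [dist [_ [_ [_ [negP [anti [inv _]]]]]]]].
  repeat (split; [assumption|]). split; intros x Px; apply (inv x Px).
Qed.

End Work.

Theorem proposition8p1 (L : COL) :
  (DeMorganAlgebra (@is_subclop L) (@leF L) (@meetF L) (@joinF L) (@bulletF L) <->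
   BooleanLattice (@is_subclop L) (@leF L) (@meetF L) (@joinF L)
     (@emptyF L) (@fullF L) (@bulletF L)) /\
  (DeMorganAlgebra (@is_subclop L) (@leF L) (@meetF L) (@joinF L) (@circF L) <->
   BooleanLattice (@is_subclop L) (@leF L) (@meetF L) (@joinF L)
     (@emptyF L) (@fullF L) (@circF L)).
Proof.
  split; split; [|apply B_to_DM| |apply B_to_DM].
  - intro DM. apply (DM_to_B_common _ DM).
    + destruct DM as [lat [dist [negP [anti [inv1 inv2]]]]].
      intros x Px. split; [|intros V xi []].
      set (U := meetF x (bulletF x)).
      assert (PU : is_subclop U) by (apply meetF_subclop; auto).
      assert (Ux : leF U x) by (intros V xi H; apply (meetF_proj _ _ _ _ H)).
      assert (Unx : leF U (bulletF x)) by (intros V xi H; apply (meetF_proj _ _ _ _ H)).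
      assert (F1 : leF fullF (bulletF U)).
      { intros V xi _. destruct (bullet_cover x Px V xi) as [H|H].
        - apply (anti U (bulletF x) PU (negP x Px) Unx), inv1, H; exact Px.
        - apply (anti U x PU Px Ux), H. }
      intros V xi HU.
      apply (bullet_full_empty V xi).
      apply (anti fullF (bulletF U) fullF_subclop (negP U PU) F1).
      apply inv1; assumption.
    + intros x Px. split; [intros V xi _; exact I|].
      intros V xi _. destruct (bullet_cover x Px V xi) as [H|H];
        [apply joinF_inl, H|apply joinF_inr, H].
  - intro DM. apply (DM_to_B_common _ DM).
    + intros x Px. split; [|intros V xi []].
      intros V xi H. destruct (meetF_proj _ _ _ _ H) as [H1 H2].
      exact (circ_disj x Px V xi H1 H2).
    + destruct DM as [lat [dist [negP [anti [inv1 inv2]]]]].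
      intros x Px. split; [intros V xi _; exact I|].
      set (U := joinF x (circF x)).
      assert (PU : is_subclop U) by (apply joinF_subclop; auto).
      assert (Ux : leF x U) by (intros V xi H; apply joinF_inl, H).
      assert (Unx : leF (circF x) U) by (intros V xi H; apply joinF_inr, H).
      assert (E1 : leF (circF U) emptyF).
      { intros V xi H. apply (circ_disj x Px V xi).
        - apply inv2; [exact Px|]. apply (anti _ _ (negP x Px) PU Unx), H.
        - apply (anti _ _ Px PU Ux), H. }
      intros V xi _.
      apply inv2; [exact PU|].
      apply (anti _ _ (negP U PU) emptyF_subclop E1).
      apply full_circ_empty; exact I.
Qed.
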